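(* Let $G=(V,E)$ be an undirected multigraph, $0\le\delta\le 1/3$, and $A\subseteq V$. Let $S\subseteq V$ cross $A$, i.e. $S\cap A\ne\emptyset$ and $A\setminus S\neq\emptyset$. Suppose $S\cap A$ is not $(1-\delta)$-boundary sparse in $A$. Let $X\in\{S\cap A,\,A\setminus S\}$ satisfy $w(X,V\setminus A)=\min\{w(S\cap A,V\setminus A),w(A\setminus S,V\setminus A)\}$. Define $S'=S\setminus A$ if $X=S\cap A$, and $S'=S\cup A$ if $X=A\setminus S$. Then $$w(S',V\setminus S')\le(1+\tfrac{3\delta}{2})\,w(S,V\setminus S).$$
   Context: $w(P,Q)$ is the number of edges (with multiplicity) with one endpoint in $P$ and the other in $Q$, for disjoint $P,Q$. For $C\subseteq V$ and $\delta\le1$, a set $U\subsetneq C$ is $(1-\delta)$-boundary sparse in $C$ if $w(U,C\setminus U)<(1-\delta)\min\{w(U,V\setminus C),\,w(C\setminus U,V\setminus C)\}$. *)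

(* Defs.v *)
From mathcomp Require Import all_boot all_order all_algebra.
Set Implicit Arguments. Unset Strict Implicit. Unset Printing Implicit Defensive.
Import Order.TTheory GRing.Theory Num.Theory.

(* An undirected multigraph on the finite vertex set V is given by a
   symmetric multiplicity function m : V -> V -> nat (m u v = number of
   edges between u and v). *)
Definition symmetric_mult (V : finType) (m : V -> V -> nat) : Prop :=
  forall u v, m u v = m v u.

(* w(P,Q): number of edges (with multiplicity) with one endpoint in P and
   the other in Q (meant for disjoint P, Q). *)
Definition wt (V : finType) (m : V -> V -> nat) (P Q : {set V}) : nat :=
  \sum_(u in P) \sum_(v in Q) m u v.

Definition boundary_sparse (R : numDomainType) (V : finType)
  (m : V -> V -> nat) (delta : R) (C U : {set V}) : Prop :=
  U \proper C /\
  ((wt m U (C :\: U))%:R <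
     (1 - delta) * (minn (wt m U (~: C)) (wt m (C :\: U) (~: C)))%:R)%R.

(* Main.v *)
Require Import Defs.
From mathcomp Require Import all_boot all_order all_algebra.
From mathcomp Require Import lra.
Import Order.TTheory GRing.Theory Num.Theory.
Set Implicit Arguments. Unset Strict Implicit.

Lemma wtUl (V : finType) (m : V -> V -> nat) (P P' Q : {set V}) :
  [disjoint P & P'] -> wt m (P :|: P') Q = wt m P Q + wt m P' Q.
Proof.
move=> dis; rewrite /wt -bigU //; apply: eq_bigl => u; by rewrite !inE.
Qed.

Lemma wtC (V : finType) (m : V -> V -> nat) (hsym : symmetric_mult m) (P Q : {set V}) :
  wt m P Q = wt m Q P.
Proof.
rewrite /wt exchange_big; apply: eq_bigr => u _; apply: eq_bigr => v _; exact: hsym.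
Qed.

Lemma wtUr (V : finType) (m : V -> V -> nat) (hsym : symmetric_mult m) (P Q Q' : {set V}) :
  [disjoint Q & Q'] -> wt m P (Q :|: Q') = wt m P Q + wt m P Q'.
Proof. by move=> d; rewrite wtC // wtUl // -!(wtC hsym P). Qed.
Ltac setsolve S A := apply/setP => ?; rewrite !inE; by case: (_ \in S); case: (_ \in A).
Ltac dissolve S A := rewrite -setI_eq0; apply/eqP; setsolve S A.

Theorem mainTheorem8 (R : realFieldType) (V : finType) (m : V -> V -> nat)
  (hsym : symmetric_mult m) (delta : R)
  (hd0 : (0 <= delta)%R) (hd1 : (delta <= 1 / 3)%R)
  (A S : {set V})
  (hcross1 : S :&: A != set0) (hcross2 : A :\: S != set0)
  (hns : ~ boundary_sparse m delta A (S :&: A))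
  (X : {set V}) (hX : X = S :&: A \/ X = A :\: S)
  (hmin : wt m X (~: A) = minn (wt m (S :&: A) (~: A)) (wt m (A :\: S) (~: A))) :
  let S' := if X == S :&: A then S :\: A else S :|: A in
  ((wt m S' (~: S'))%:R <= (1 + 3 * delta / 2) * (wt m S (~: S))%:R)%R.
Proof.
cbv zeta.
set a := S :&: A; set b := A :\: S; set c := S :\: A; set d := ~: (S :|: A).
have hS : S = a :|: c by setsolve S A.
have hnS : ~: S = b :|: d by setsolve S A.
have hnA : ~: A = c :|: d by setsolve S A.
have hAa : A :\: a = b by setsolve S A.
have dac : [disjoint a & c] by dissolve S A.
have dbd : [disjoint b & d] by dissolve S A.
have dcd : [disjoint c & d] by dissolve S A.
have dab : [disjoint a & b] by dissolve S A.
have dabd : [disjoint a :|: b & d] by dissolve S A.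
have dabc : [disjoint a :|: b & c] by dissolve S A.
have hprop : a \proper A.
  rewrite properE subsetIr /=; apply/negP => H.
  case/set0Pn: hcross2 => x; rewrite inE => /andP [xS xA].
  by move: (subsetP H x xA); rewrite inE (negbTE xS).
have H : ((1 - delta) * (minn (wt m a (~: A)) (wt m b (~: A)))%:R <= (wt m a b)%:R)%R.
  rewrite leNgt; apply/negP => H; apply: hns; split => //; by rewrite hAa.
have wS : wt m S (~: S) = wt m a b + wt m a d + wt m c b + wt m c d.
  by rewrite hnS hS wtUl // !wtUr // (wtC hsym c b) !addnA.
have d13 : (1 - delta >= 2/3)%R by lra.
case: ifP => hXa.
- have hc : ~: c = a :|: b :|: d by setsolve S A.
  have -> : wt m c (~: c) = wt m c a + wt m c b + wt m c d.
    by rewrite hc !wtUr.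
  rewrite (eqP hXa) in hmin; rewrite -hmin hnA wtUr // (wtC hsym a c) in H.
  rewrite wS !natrD.
  move: H; rewrite !natrD.
  set x := ((wt m a b)%:R : R)%R; set y := ((wt m c a)%:R : R)%R; set z := ((wt m a d)%:R : R)%R.
  set u := ((wt m c b)%:R : R)%R; set t := ((wt m c d)%:R : R)%R.
  have x0 : (0 <= x)%R by rewrite ler0n. have y0 : (0 <= y)%R by rewrite ler0n.
  have z0 : (0 <= z)%R by rewrite ler0n. have u0 : (0 <= u)%R by rewrite ler0n. have t0 : (0 <= t)%R by rewrite ler0n.
  move=> H.
  have h2 : (2/3 * (y + z) <= x)%R by nra.
  have h3 : (delta * (2/3 * (y + z)) <= delta * x)%R by apply: ler_wpM2l.
  nra.
- have hXb : X = b by case: hX => // hXa'; rewrite hXa' eqxx in hXa.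
  have hU : S :|: A = a :|: b :|: c by setsolve S A.
  have -> : wt m (S :|: A) (~: (S :|: A)) = wt m a d + wt m b d + wt m c d.
    by rewrite -/d hU !wtUl.
  rewrite hXb in hmin; rewrite -hmin hnA wtUr // (wtC hsym b c) in H.
  rewrite wS !natrD.
  move: H; rewrite !natrD.
  set x := ((wt m a b)%:R : R)%R; set y := ((wt m c b)%:R : R)%R; set z := ((wt m b d)%:R : R)%R.
  set u := ((wt m a d)%:R : R)%R; set t := ((wt m c d)%:R : R)%R.
  have x0 : (0 <= x)%R by rewrite ler0n. have y0 : (0 <= y)%R by rewrite ler0n.
  have z0 : (0 <= z)%R by rewrite ler0n. have u0 : (0 <= u)%R by rewrite ler0n. have t0 : (0 <= t)%R by rewrite ler0n.
  move=> H.
  have h2 : (2/3 * (y + z) <= x)%R by nra.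
  have h3 : (delta * (2/3 * (y + z)) <= delta * x)%R by apply: ler_wpM2l.
  nra.
Qed.
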